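(* Let $0<p<1$ and let $\mu$ be a finite Borel measure on $S^{n-1}$ not concentrated in any closed hemisphere, and let $\mathfrak C_p(\mu)>0$ be a constant such that $\int_{S^{n-1}}(u\cdot v)_+^p\,d\mu(v)\ge\mathfrak C_p(\mu)$ for every $u\in S^{n-1}$. Let $\overline\mu_m$ be constructed as in the context. Then for all sufficiently large $m$, $$\int_{S^{n-1}}(u\cdot v)_+^p\,d\overline\mu_m(v)\ge\tfrac12\mathfrak C_p(\mu)\quad\text{for every }u\in S^{n-1}.$$
   Context: $(t)_+=\max\{t,0\}$; $|\nu|$ is total mass. Construction: for each positive integer $m$, $U_{1,m},\dots,U_{\mathcal N_m,m}$ is a partition of $S^{n-1}$ into Borel sets each of diameter less than $1/m$ and with nonempty interior relative to $S^{n-1}$, $v_{i,m}\in U_{i,m}$ are chosen in general position in dimension $n$, $\mu_m=\sum_{i=1}^{\mathcal N_m}(\mu(U_{i,m})+\mathcal N_m^{-2})\delta_{v_{i,m}}$ and $\overline\mu_m=\frac{|\mu|}{|\mu_m|}\mu_m$. *)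

(* Defs.v *)
From HB Require Import structures.
From mathcomp Require Import all_boot all_order all_algebra.
From mathcomp Require Import all_classical all_reals all_analysis.
Set Implicit Arguments. Unset Strict Implicit. Unset Printing Implicit Defensive.
Import Order.TTheory GRing.Theory Num.Theory.
Import numFieldNormedType.Exports.
Local Open Scope classical_set_scope.
Local Open Scope ring_scope.

(* Vectors of R^n are row vectors 'rV[R]_n; the Borel sigma-algebra is the one
   generated by the open sets of the (product = Euclidean) topology. *)
Definition BorelVec (R : realType) (n : nat) :=
  g_sigma_algebraType (@open 'rV[R]_n).

Definition dotv (R : realType) (n : nat) (u v : 'rV[R]_n) : R :=
  \sum_(i < n) u ord0 i * v ord0 i.

Definition enorm (R : realType) (n : nat) (x : 'rV[R]_n) : R :=
  Num.sqrt (dotv x x).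

Definition sphere (R : realType) (n : nat) : set 'rV[R]_n :=
  [set v | dotv v v = 1].
Arguments sphere {R} n.

Definition closed_hemisphere (R : realType) (n : nat) (u : 'rV[R]_n)
  : set 'rV[R]_n := [set v | sphere n v /\ 0 <= dotv u v].

Definition diam_lt (R : realType) (n : nat) (A : set 'rV[R]_n) (r : R) :=
  exists2 d : R, d < r & forall x y, A x -> A y -> enorm (x - y) <= d.

Definition rel_interior_nonempty (R : realType) (n : nat) (A : set 'rV[R]_n) :=
  exists x, exists2 e : R, 0 < e &
    [set y | sphere n y /\ enorm (y - x) < e] `<=` A.

Definition general_position (R : realType) (n N : nat) (v : 'I_N -> 'rV[R]_n) :=
  forall (k : nat) (f : 'I_k -> 'I_N), (k <= n)%N -> injective f ->
    row_free (\matrix_(j < k) v (f j)).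

Definition pospow (R : realType) (t p : R) : R := (Num.max t 0) `^ p.

(* weights of mu_m = sum_i (mu(U_i) + N^-2) delta_{v_i} *)
Definition disc_weight (R : realType) (n N : nat)
  (mu : set (BorelVec R n) -> \bar R) (U : 'I_N -> set (BorelVec R n))
  (i : 'I_N) : R :=
  fine (mu (U i)) + ((N%:R : R) ^+ 2)^-1.

(* integral of f against the normalized measure
   mubar_m = (|mu| / |mu_m|) mu_m, mu_m a finite sum of Dirac masses *)
Definition disc_integral (R : realType) (n N : nat)
  (mu : set (BorelVec R n) -> \bar R) (U : 'I_N -> set (BorelVec R n))
  (v : 'I_N -> 'rV[R]_n) (f : 'rV[R]_n -> R) : R :=
  (fine (mu setT) / \sum_(i < N) disc_weight mu U i) *
  \sum_(i < N) disc_weight mu U i * f (v i).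

(* Main.v *)
Require Import Defs.
From HB Require Import structures.
From mathcomp Require Import all_boot all_order all_algebra.
From mathcomp Require Import all_classical all_reals all_analysis.
From mathcomp Require Import ring lra measurable_realfun.
Import Order.TTheory GRing.Theory Num.Theory.
Import numFieldNormedType.Exports.
Local Open Scope classical_set_scope.
Local Open Scope ring_scope.

Section Meas.
Context d (T : measurableType d) (R : realType).
Variable mu : {measure set T -> \bar R}.

Lemma le_int_T (D : set T) (f g : T -> \bar R) :
  (forall x, D x -> (0 <= f x)%E) -> (forall x, (0 <= g x)%E) ->
  (forall x, D x -> (f x <= g x)%E) ->
  (\int[mu]_(x in D) f x <= \int[mu]_(x in setT) g x)%E.
Proof.
move=> f0 g0 fg; rewrite ge0_integralE // ge0_integralE // patch_setT.
apply: le_ereal_sup => _ [h hf <-]; exists h => //= x.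
apply: (le_trans (hf x)); rewrite /patch; case: ifP => [/set_mem Dx|_].
  exact: fg.
exact: g0.
Qed.

Lemma int_step N (U : 'I_N -> set T) (c : 'I_N -> R) :
  (forall i, measurable (U i)) -> (forall i, 0 <= c i) ->
  (\int[mu]_(x in setT) (\sum_(i < N) c i * \1_(U i) x)%:E =
   \sum_(i < N) (c i)%:E * mu (U i))%E.
Proof.
move=> mU c0.
under eq_integral do rewrite -sumEFin.
rewrite ge0_integral_sum //; last first.
  by move=> i x _; rewrite lee_fin mulr_ge0 // indicE; case: (_ \in _).
  move=> i; apply/measurable_EFinP; apply: measurable_funM => //.
apply: eq_bigr => i _.
rewrite (integralZl_indic _ (fun=> U i)) //; last first.
  by move=> /lt_geF; rewrite c0.
by rewrite integral_indic // setIT.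
Qed.

End Meas.

Set Implicit Arguments. Unset Strict Implicit. Unset Printing Implicit Defensive.

Section Helpers.
Variable R : realType.

Lemma dotv_ge0 n (x : 'rV[R]_n) : 0 <= dotv x x.
Proof. by apply: sumr_ge0 => i _; rewrite -expr2 sqr_ge0. Qed.

Lemma cauchy_dot n (u x : 'rV[R]_n) : dotv u u = 1 -> `|dotv u x| <= enorm x.
Proof.
move=> uu; set t := dotv u x.
have H : 0 <= \sum_(i < n) (x ord0 i - t * u ord0 i) ^+ 2.
  by apply: sumr_ge0 => i _; exact: sqr_ge0.
have E : forall c, \sum_(i < n) (x ord0 i - c * u ord0 i) ^+ 2 =
   dotv x x - 2 * c * dotv u x + c ^+ 2 * dotv u u.
  move=> c; rewrite /dotv !mulr_sumr -sumrB -big_split /=; apply: eq_bigr => i _; ring.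

have t2 : t ^+ 2 <= dotv x x.
  move: H; rewrite E uu -/t mulr1 expr2; nra.
by rewrite /enorm -sqrtr_sqr ler_sqrt // dotv_ge0.
Qed.

Lemma subadd_powR (x y p : R) : 0 <= x -> 0 <= y -> 0 < p <= 1 ->
  (x + y) `^ p <= x `^ p + y `^ p.
Proof.
move=> x0 y0 /andP[p0 p1].
have [->|xn0] := eqVneq x 0; first by rewrite add0r powR0 ?gt_eqF // add0r.
have [->|yn0] := eqVneq y 0; first by rewrite addr0 powR0 ?gt_eqF // addr0.
have xp : 0 < x by rewrite lt_neqAle eq_sym xn0.
have yp : 0 < y by rewrite lt_neqAle eq_sym yn0.
set s := x + y; have sp : 0 < s by rewrite /s; lra.
have hx : x `^ p = (x / s) `^ p * s `^ p.
  by rewrite -powRM ?divfK ?gt_eqF // ?divr_ge0 // ltW.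
have hy : y `^ p = (y / s) `^ p * s `^ p.
  by rewrite -powRM ?divfK ?gt_eqF // ?divr_ge0 // ltW.
have h1 : x / s <= (x / s) `^ p.
  apply: ger1_powR; last exact: p1.
  rewrite divr_gt0 //= ler_pdivrMr // mul1r /s; lra.
have h2 : y / s <= (y / s) `^ p.
  apply: ger1_powR; last exact: p1.
  rewrite divr_gt0 //= ler_pdivrMr // mul1r /s; lra.
have hs : x / s + y / s = 1 by rewrite -mulrDl divff // gt_eqF.
have sp0 : 0 <= s `^ p by exact: powR_ge0.
rewrite hx hy -mulrDl -{1}(mul1r (s `^ p)) ler_wpM2r //; lra.
Qed.

Lemma pospow_ge0 (t p : R) : 0 <= pospow t p.
Proof. exact: powR_ge0. Qed.

Lemma pospow_holder (a b p : R) : 0 < p <= 1 ->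
  pospow a p <= pospow b p + `|a - b| `^ p.
Proof.
move=> hp; rewrite /pospow.
have hb : 0 <= Num.max b 0 by rewrite le_max lexx orbT.
have ha : 0 <= Num.max a 0 by rewrite le_max lexx orbT.
have hab : Num.max a 0 <= Num.max b 0 + `|a - b|.
  rewrite ge_max; apply/andP; split.
    have : a - b <= `|a - b| := ler_norm _.
    have : b <= Num.max b 0 by rewrite le_max lexx.
    lra.
  by apply: addr_ge0 => //.
apply: le_trans; last exact: (subadd_powR hb (normr_ge0 (a - b)) hp).
have p0 : 0 <= p by case/andP: hp => /ltW.
by apply: ge0_ler_powR; rewrite ?nnegrE ?addr_ge0.
Qed.


Lemma dotvB n (u x y : 'rV[R]_n) : dotv u (x - y) = dotv u x - dotv u y.
Proof. by rewrite /dotv -sumrB; apply: eq_bigr => i _; rewrite !mxE mulrBr. Qed.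

Lemma dotvC n (u x : 'rV[R]_n) : dotv u x = dotv x u.
Proof. by rewrite /dotv; apply: eq_bigr => i _; rewrite mulrC. Qed.

Lemma dotvNl n (u x : 'rV[R]_n) : dotv (- u) x = - dotv u x.
Proof. by rewrite /dotv -sumrN; apply: eq_bigr => i _; rewrite !mxE mulNr. Qed.

Lemma sphereN n (u : 'rV[R]_n) : sphere n u -> sphere n (- u).
Proof. by rewrite /sphere /= dotvNl dotvC dotvNl opprK. Qed.

Lemma dotv_subsub n (u v : 'rV[R]_n) : sphere n u -> sphere n v ->
  dotv (u - v) (u - v) = 2 - 2 * dotv u v.
Proof.
rewrite /sphere /= => uu vv.
have -> : dotv (u - v) (u - v) = dotv u u - 2 * dotv u v + dotv v v.
  rewrite /dotv !mulr_sumr -sumrB -big_split /=; apply: eq_bigr => i _.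
  rewrite !mxE; ring.
rewrite uu vv; ring.
Qed.

Lemma enorm1 n (v : 'rV[R]_n) : sphere n v -> enorm v = 1.
Proof. by rewrite /sphere /enorm /= => ->; rewrite sqrtr1. Qed.

Lemma dot_le1 n (u v : 'rV[R]_n) : sphere n u -> sphere n v -> `|dotv u v| <= 1.
Proof. by move=> su sv; rewrite -(enorm1 sv); apply: cauchy_dot. Qed.

Lemma pospow_le1 (t p : R) : `|t| <= 1 -> 0 <= p -> pospow t p <= 1.
Proof.
move=> t1 p0; rewrite /pospow; apply: (@le_trans _ _ (1 `^ p)); last by rewrite powR1.
have h0 : 0 <= Num.max t 0 by rewrite le_max lexx orbT.
have h1 : Num.max t 0 <= 1.
  rewrite ge_max ler01 andbT; apply: le_trans t1; exact: ler_norm.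
by apply: ge0_ler_powR; rewrite ?nnegrE ?ler01.
Qed.

Lemma pospow_pair (t p : R) : `|t| <= 1 -> 0 < p ->
  pospow t p + pospow (- t) p <= 1.
Proof.
move=> t1 p0; have [t0|t0] := leP t 0.
  have -> : pospow t p = 0 by rewrite /pospow max_r // powR0 // gt_eqF.
  by rewrite add0r pospow_le1 ?normrN // ltW.
have -> : pospow (- t) p = 0.
  by rewrite /pospow max_r ?oppr_le0 ?ltW // powR0 // gt_eqF.
by rewrite addr0 pospow_le1 // ltW.
Qed.

Lemma enorm_lt1 n (x : 'rV[R]_n) : enorm x < 1 -> dotv x x < 1.
Proof.
move=> h; have e0 : 0 <= enorm x by exact: sqrtr_ge0.
have : enorm x ^+ 2 < 1.
  by rewrite -(expr1n _ 2%N) ltrXn2r // ?ler01.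
by rewrite /enorm sqr_sqrtr // dotv_ge0.
Qed.

Lemma near_half n (u v : 'rV[R]_n) (p : R) : sphere n u -> sphere n v ->
  enorm (u - v) < 1 -> 0 < p <= 1 -> 1 / 2 <= pospow (dotv u v) p.
Proof.
move=> su sv /enorm_lt1; rewrite dotv_subsub // => h /andP[p0 p1].
have d1 : 1 / 2 < dotv u v by lra.
have du : dotv u v <= 1.
  by have := dot_le1 su sv; rewrite ler_norml => /andP[].
rewrite /pospow max_l; last lra.
apply: le_trans (ger1_powR _ p1); first lra.
apply/andP; split => //; lra.
Qed.

End Helpers.


Section Points.
Variable R : realType.
Variable n' : nat.

Definition wpt (x : R) : 'rV[R]_(n'.+2) :=
  \row_j (if (j : nat) == 0%N then x else if (j : nat) == 1%N then Num.sqrt (1 - x ^+ 2) else 0).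

Lemma wpt_sphere (x : R) : 0 <= x <= 1 -> sphere (n'.+2) (wpt x).
Proof.
move=> /andP[x0 x1]; rewrite /sphere /= /dotv 2!big_ord_recl big1 => [|i _]; last first.
  by rewrite !mxE /= mul0r.
rewrite !mxE /= addr0 -!expr2 sqr_sqrtr; first ring.
rewrite subr_ge0 -(expr1n _ 2%N) ler_pXn2r // ?nnegrE //.
Qed.

Lemma wpt_dist (x y : R) : `|x - y| <= enorm (wpt x - wpt y).
Proof.
rewrite /enorm -sqrtr_sqr ler_sqrt ?dotv_ge0 // /dotv big_ord_recl.
rewrite !mxE /= -expr2 lerDl; apply: sumr_ge0 => i _; rewrite -expr2 sqr_ge0 //.
Qed.

Lemma many_points N (W : 'I_N -> set 'rV[R]_(n'.+2)) (r : R) (K : nat) :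
  (forall w, sphere _ w -> exists i, W i w) -> (forall i, diam_lt (W i) r) ->
  r <= (K.+1%:R)^-1 -> (K.+1 <= N)%N.
Proof.
move=> cov diam rK.
pose x (k : 'I_K.+1) : R := k%:R / K.+1%:R.
have Kp : 0 < K.+1%:R :> R by rewrite ltr0n.
have xs k : sphere _ (wpt (x k)).
  apply: wpt_sphere; rewrite /x divr_ge0 ?ler0n //= ler_pdivrMr // mul1r ler_nat.
  exact: ltnW.
have [f hf] := boolp.choice (fun k => cov _ (xs k)).
suff inj : injective f by have := @leq_card _ _ f inj; rewrite !card_ord.
move=> k l fkl; apply/val_inj/eqP; apply/negPn/negP => kl.
have [dd ddr hd] := diam (f k).
have hl : W (f k) (wpt (x l)) by rewrite fkl; exact: hf.
have h := hd _ _ (hf k) hl.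
have h2 := wpt_dist (x k) (x l).
have h1 : 1 <= `|k%:R - l%:R : R|.
  case: (ltngtP k l) => hkl.
  - rewrite distrC ger0_norm; last by rewrite subr_ge0 ler_nat ltnW.
    by rewrite -natrB ?ler1n ?subn_gt0 // ltnW.
  - rewrite ger0_norm; last by rewrite subr_ge0 ler_nat ltnW.
    by rewrite -natrB ?ler1n ?subn_gt0 // ltnW.
  - by move: kl; rewrite /= hkl eqxx.
have h3 : (K.+1%:R)^-1 <= `|x k - x l|.
  rewrite /x -mulrBl normrM [X in _ <= _ * X]ger0_norm ?invr_ge0 ?ler0n //.
  by rewrite -[X in X <= _]mul1r ler_wpM2r // invr_ge0 ler0n.
have : dd < dd.
  apply: (lt_le_trans ddr); apply: (le_trans rK); apply: (le_trans h3).
  exact: le_trans h2 h.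
by rewrite ltxx.
Qed.



End Points.


Section Key.
Variable R : realType.
Variable n : nat.
Variable mu : {measure set (BorelVec R n) -> \bar R}.
Hypothesis muT : (mu setT < +oo)%E.

Lemma mu_fin (X : set (BorelVec R n)) : measurable X -> mu X = (fine (mu X))%:E.
Proof.
move=> mX; rewrite fineK // ge0_fin_numE //; apply: le_lt_trans muT.
by apply: le_measure; rewrite ?inE.
Qed.

Lemma key (p Cp : R) N (U : 'I_N -> set (BorelVec R n)) (v : 'I_N -> 'rV[R]_n)
  (u : 'rV[R]_n) (m : nat) :
  0 < p <= 1 -> (0 < m)%N -> sphere n u ->
  (Cp%:E <= \int[mu]_(w in sphere n) (pospow (dotv u w) p)%:E)%E ->
  (forall i, measurable (U i)) -> (forall w, sphere n w -> exists i, U i w) ->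
  (forall i, diam_lt (U i) (m%:R)^-1) -> (forall i, U i (v i)) ->
  Cp <= \sum_(i < N) fine (mu (U i)) * pospow (dotv u (v i)) p
        + (m%:R^-1) `^ p * \sum_(i < N) fine (mu (U i)).
Proof.
move=> hp m0 su hint mU cov diam vU.
have p0 : 0 <= p by case/andP: hp => /ltW.
set dl := (m%:R^-1) `^ p.
have dl0 : 0 <= dl by exact: powR_ge0.
pose c i := pospow (dotv u (v i)) p + dl.
have c0 i : 0 <= c i by rewrite /c addr_ge0 // pospow_ge0.
have le := @le_int_T _ _ _ mu (sphere n) (fun w => (pospow (dotv u w) p)%:E)
  (fun x => (\sum_(i < N) c i * \1_(U i) x)%:E).
rewrite int_step // in le.
have e : (\sum_(i < N) (c i)%:E * mu (U i) =
   (\sum_(i < N) c i * fine (mu (U i)))%:E)%E.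
  rewrite -sumEFin; apply: eq_bigr => i _; rewrite EFinM -mu_fin //.
have H : (Cp%:E <= (\sum_(i < N) c i * fine (mu (U i)))%:E)%E.
  apply: (le_trans hint); rewrite -e; apply: le.
  - by move=> x _; rewrite lee_fin pospow_ge0.
  - move=> x; rewrite lee_fin; apply: sumr_ge0 => i _.
    by rewrite mulr_ge0 // indicE; case: (_ \in _).
  - move=> x sx; rewrite lee_fin; have [i ix] := cov _ sx.
    apply: (@le_trans _ _ (c i)).
      rewrite /c; apply: le_trans (pospow_holder _ (dotv u (v i)) hp) _; rewrite lerD2l.
      have [dd ddm hd] := diam i.
      have h1 : `|dotv u x - dotv u (v i)| <= m%:R^-1.
        rewrite -dotvB; apply: le_trans (cauchy_dot _ su) _.
        exact/ltW/(le_lt_trans (hd _ _ ix (vU i))).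
      by apply: ge0_ler_powR; rewrite ?nnegrE ?invr_ge0 ?ler0n.
    rewrite (bigD1 i) //= indicE mem_set // mulr1 lerDl.
    by apply: sumr_ge0 => j _; rewrite mulr_ge0 // indicE; case: (_ \in _).
move: H; rewrite lee_fin => H; apply: (le_trans H); rewrite le_eqVlt; apply/orP; left; apply/eqP.
rewrite /c mulr_sumr -big_split /=; apply: eq_bigr => i _; ring.
Qed.


Lemma B_le N (U : 'I_N -> set (BorelVec R n)) :
  (forall i, measurable (U i)) -> (forall i j, i != j -> U i `&` U j = set0) ->
  \sum_(i < N) fine (mu (U i)) <= fine (mu setT).
Proof.
move=> mU disj.
have e : ((\sum_(i < N) fine (mu (U i)))%:E =
   \sum_(i < N) (1:R)%:E * mu (U i))%E.
  rewrite -sumEFin; apply: eq_bigr => i _; rewrite mul1e -mu_fin //.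
rewrite -lee_fin e -int_step //; try (move=> *; exact: ler01).
rewrite -(@mu_fin setT measurableT).
apply: le_trans (@le_int_T _ _ _ mu setT (fun x => (\sum_(i < N) 1 * \1_(U i) x)%:E)
   (cst 1%E) _ _ _) _.
- move=> x _; rewrite lee_fin; apply: sumr_ge0 => i _.
  by rewrite mul1r indicE; case: (_ \in _).
- by move=> x; rewrite /= lee01.
- move=> x _; rewrite /= lee_fin.
  have [[i ix]|nx] := boolp.pselect (exists i, U i x).
    rewrite (bigD1 i) //= mul1r indicE mem_set // big1 ?addr0 // => j ji.
    rewrite mul1r indicE memNset //= => jx.
    have : (U i `&` U j) x by split.
    by rewrite disj // eq_sym.
  rewrite big1 ?ler01 // => j _; rewrite mul1r indicE memNset //= => jx.
  by apply: nx; exists j.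
by rewrite integral_cst // mul1e.
Qed.

End Key.


Section Arith.
Variable R : realType.

Lemma arith_goal (A B S T Cp q r : R) : 0 < B + q ->
  Cp / 2 * (B + q) <= A * (S + r * T) -> Cp / 2 <= A / (B + q) * (S + r * T).
Proof. by move=> Dp h; rewrite mulrAC ler_pdivlMr. Qed.

Lemma arith1 (A B S T Cp dl e q r : R) : 0 <= B -> B <= A -> 0 <= S ->
  Cp <= S + dl * B -> 0 <= T -> 0 <= r -> 0 <= dl -> dl <= e ->
  e * (4 * (A + 1)) = Cp -> 0 < Cp -> 0 < q -> q <= A / 2 ->
  Cp / 2 <= A / (B + q) * (S + r * T).
Proof.
move=> B0 BA S0 hS T0 r0 dl0 dle he Cp0 q0 qA.
apply: arith_goal; first lra.
have A0 : 0 <= A by lra.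
have h1 : dl * B <= e * A.
  apply: ler_pM => //; exact: (le_trans dl0 dle).
have h2 : e * A * 4 <= Cp.
  rewrite -he; have : 0 <= e by exact: (le_trans dl0 dle). nra.
have h3 : A * (Cp - e * A) <= A * S by apply: ler_wpM2l => //; lra.
have h4 : 0 <= A * (r * T) by rewrite !mulr_ge0.
have h5 : Cp / 2 * (B + q) <= Cp / 2 * (A + A / 2).
  by apply: ler_wpM2l; lra.
have h6 : A * (e * A) * 4 <= A * Cp by rewrite -mulrA [_ * 4]mulrC mulrA; nra.
nra.
Qed.

Lemma arith2 (A B S T Cp dl e q r : R) : 0 <= B -> B <= A -> 0 <= S ->
  Cp <= S + dl * B -> 2 * Cp <= B + 2 * dl * B -> 1 / 2 <= T -> 0 <= dl -> dl <= e ->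
  e * (4 * (A + 1)) = Cp -> 0 < Cp -> 0 < q -> q <= 1 -> q <= 2 * r ->
  Cp / 2 <= A / (B + q) * (S + r * T).
Proof.
move=> B0 BA S0 hS h2C T0 dl0 dle he Cp0 q0 q1 qr.
apply: arith_goal; first lra.
have A0 : 0 <= A by lra.
have e0 : 0 <= e by exact: (le_trans dl0 dle).
have h1 : dl * B <= dl * A by apply: ler_wpM2l.
have h3 : A * (Cp - dl * A) <= A * S by apply: ler_wpM2l => //; lra.
have r0 : 0 <= r by lra.
have h4 : A * r / 2 <= A * (r * T).
  have Ar : 0 <= A * r by apply: mulr_ge0.
  have : 0 <= A * r * (T - 1 / 2) by apply: mulr_ge0 => //; lra.
  nra.
have h5 : Cp / 2 * B <= Cp / 2 * A by apply: ler_wpM2l => //; lra.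
have h6 : Cp / 2 * q <= (A / 4 + dl * A / 2) * q.
  apply: ler_wpM2r; lra.
have h7 : A / 4 * q <= A * r / 2 by nra.
have h8 : dl * A / 2 * q <= dl * A / 2.
  have : 0 <= dl * A by apply: mulr_ge0.
  nra.
have h9 : dl * A * (A + 1) <= e * A * (A + 1).
  by apply: ler_wpM2r; [lra | apply: ler_wpM2r].
have h10 : e * A * (A + 1) * 4 = A * Cp by rewrite -he; ring.
nra.
Qed.
End Arith.


Section Fin.
Variable R : realType.

Lemma delta_small (p e : R) : 0 < p -> 0 < e ->
  exists M0 : nat, (0 < M0)%N /\ forall m : nat, (M0 <= m)%N -> (m%:R^-1) `^ p <= e.
Proof.
move=> p0 e0; set e' := e `^ (p^-1).
have e'0 : 0 < e' by apply: powR_gt0.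
have ie : 0 <= e'^-1 by rewrite invr_ge0 ltW.
have hb := @archi_boundP R (e'^-1) ie.
set b := Num.Def.archi_bound _ in hb.
exists b.+1; split => // m hm.
have mp : 0 < m%:R :> R by rewrite ltr0n (leq_trans _ hm).
have h1 : m%:R^-1 <= e'.
  rewrite -[e']invrK lef_pV2 ?posrE ?invr_gt0 //.
  apply/ltW/(lt_le_trans hb); rewrite ler_nat; exact: ltnW.
apply: (@le_trans _ _ (e' `^ p)).
  apply: ge0_ler_powR; rewrite ?nnegrE ?invr_ge0 ?ler0n ?(ltW p0) ?(ltW e'0) //.
by rewrite /e' -powRrM mulVf ?gt_eqF // powRr1 // ltW.
Qed.

Lemma disc_eq n N (mu : set (BorelVec R n) -> \bar R) (U : 'I_N -> set (BorelVec R n))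
  (v : 'I_N -> 'rV[R]_n) (f : 'rV[R]_n -> R) :
  disc_integral mu U v f =
  fine (mu setT) / (\sum_(i < N) fine (mu (U i)) + N%:R^-1) *
  (\sum_(i < N) fine (mu (U i)) * f (v i) + (N%:R ^+ 2)^-1 * \sum_(i < N) f (v i)).
Proof.
rewrite /disc_integral /disc_weight big_split /= sumr_const card_ord.
congr (_ / (_ + _) * _).
  have [->|N0] := eqVneq N 0%N; first by rewrite mulr0n invr0.
  by rewrite -mulr_natr; field; rewrite pnatr_eq0.
by rewrite mulr_sumr -big_split /=; apply: eq_bigr => i _; rewrite mulrDl.
Qed.

End Fin.

Unset Implicit Arguments.

Theorem lemma5p5 (R : realType) (n : nat) (p : R)
  (mu : {measure set (BorelVec R n) -> \bar R}) (Cp : R)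
  (N : nat -> nat) (U : forall m : nat, 'I_(N m) -> set (BorelVec R n))
  (v : forall m : nat, 'I_(N m) -> 'rV[R]_n) :
  0 < p < 1 ->
  (mu setT < +oo)%E ->
  mu (~` sphere n) = 0%E ->
  (forall u : 'rV[R]_n, sphere n u -> mu (~` closed_hemisphere u) <> 0%E) ->
  0 < Cp ->
  (forall u : 'rV[R]_n, sphere n u ->
     (\int[mu]_(w in sphere n) (pospow (dotv u w) p)%:E >= Cp%:E)%E) ->
  (forall m : nat, (0 < m)%N -> forall i, measurable (U m i)) ->
  (forall m : nat, (0 < m)%N -> forall i, U m i `<=` sphere n) ->
  (forall m : nat, (0 < m)%N -> forall w, sphere n w -> exists i, U m i w) ->
  (forall m : nat, (0 < m)%N -> forall i j, i != j -> U m i `&` U m j = set0) ->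
  (forall m : nat, (0 < m)%N -> forall i, diam_lt (U m i) (m%:R)^-1) ->
  (forall m : nat, (0 < m)%N -> forall i, rel_interior_nonempty (U m i)) ->
  (forall m : nat, (0 < m)%N -> forall i, U m i (v m i)) ->
  (forall m : nat, (0 < m)%N -> general_position (v m)) ->
  exists M : nat, forall m : nat, (M <= m)%N ->
    forall u : 'rV[R]_n, sphere n u ->
      disc_integral mu (U m) (v m) (fun w => pospow (dotv u w) p) >= Cp / 2.
Proof.
move=> /andP[p0 p1] muT _ _ Cp0 Hint mU Usub Ucov Udisj Udiam _ vU _.
have hp : 0 < p <= 1 by rewrite p0 ltW.
set A := fine (mu setT).
have A0 : 0 <= A by apply: fine_ge0; exact: measure_ge0.
set e := Cp / (4 * (A + 1)).
have he : e * (4 * (A + 1)) = Cp by rewrite /e divfK // gt_eqF //; lra.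
have e0 : 0 < e by rewrite /e divr_gt0 //; lra.
have [M0 [M0p hM0]] := delta_small p0 e0.
pose B m := \sum_(i < N m) fine (mu (U m i)).
pose S m u := \sum_(i < N m) fine (mu (U m i)) * pospow (dotv u (v m i)) p.
pose dl (m : nat) := (m%:R^-1) `^ p.
have facts : forall m, (M0 <= m)%N -> forall u, sphere n u ->
  (Cp <= S m u + dl m * B m) /\ (0 <= B m) /\ (B m <= A) /\ (0 <= S m u) /\
  (S m u <= B m) /\ (0 <= dl m) /\ (dl m <= e).
  move=> m hm u su; have m0 : (0 < m)%N := leq_trans M0p hm.
  split; [|split; [|split; [|split; [|split; [|split]]]]].
  - apply: (key muT hp m0 su (Hint u su) (mU m m0) (Ucov m m0) (Udiam m m0) (vU m m0)).
  - by apply: sumr_ge0 => i _; apply: fine_ge0; exact: measure_ge0.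
  - exact: (B_le muT (mU m m0) (Udisj m m0)).
  - by apply: sumr_ge0 => i _; rewrite mulr_ge0 ?pospow_ge0 //; apply: fine_ge0; exact: measure_ge0.
  - apply: ler_sum => i _; apply: ler_piMr; first by apply: fine_ge0; exact: measure_ge0.
    apply: pospow_le1 (ltW p0); apply: dot_le1 su _.
    exact: (Usub m m0 i _ (vU m m0 i)).
  - exact: powR_ge0.
  - exact: hM0.
have [n0|nn0] := eqVneq n 0%N.
  exists 0%N => m _ u; subst n.
  by rewrite /sphere /= /dotv big_ord0 => /esym/eqP; rewrite oner_eq0.
have [n1|n2] := eqVneq n 1%N.
  subst n; exists M0 => m hm u su.
  have m0 : (0 < m)%N := leq_trans M0p hm.
  have [hC [B0 [BA [S0 [SB [dl0 dle]]]]]] := facts m hm u su.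
  have [hC' _] := facts m hm (- u) (sphereN su).
  have Npos : (0 < N m)%N by have [i _] := Ucov m m0 u su; exact: (leq_ltn_trans _ (ltn_ord i)).
  have N2 : (N m <= 2)%N.
    pose g (i : 'I_(N m)) : bool := 0 < v m i ord0 ord0.
    suff inj : injective g by have := @leq_card _ _ g inj; rewrite card_ord card_bool.
    move=> i j gij; apply/eqP; apply/negPn/negP => ij.
    have vij : v m i = v m j.
      have sq k : (v m k ord0 ord0) ^+ 2 = 1.
        have := Usub m m0 k _ (vU m m0 k); rewrite /sphere /= /dotv big_ord1.
        by rewrite expr2.
      have hi := sq i; have hj := sq j.
      move/eqP: hi; rewrite sqrf_eq1 => /orP[] /eqP hi;
      move/eqP: hj; rewrite sqrf_eq1 => /orP[] /eqP hj;
      apply/rowP => k; rewrite (ord1 k) ?hi ?hj //;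
      move: gij; rewrite /g hi hj ?ltr01 ?ltrN10 //.
        by rewrite oppr_gt0 ltr10.
      by rewrite oppr_gt0 ltr10.
    have : (U m i `&` U m j) (v m i) by split; [exact: vU | rewrite vij; exact: vU].
    by rewrite Udisj.
  rewrite disc_eq; apply: (@arith2 _ _ _ _ _ _ (dl m) e) => //.
  - have : S m u + S m (- u) <= B m.
      rewrite -big_split /=; apply: ler_sum => i _; rewrite -mulrDr.
      apply: ler_piMr; first by apply: fine_ge0; exact: measure_ge0.
      rewrite dotvNl; apply: pospow_pair p0; apply: dot_le1 su _.
      exact: (Usub m m0 i _ (vU m m0 i)).
    rewrite /S /B in hC hC' *; lra.
  - have [j uj] := Ucov m m0 u su.
    apply: le_trans (near_half su (Usub m m0 j _ (vU m m0 j)) _ hp) _.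
      have [dd ddm hd] := Udiam m m0 j.
      apply: (le_lt_trans (hd _ _ uj (vU m m0 j))); apply: (lt_le_trans ddm).
      by rewrite invf_le1 ?ler1n ?ltr0n.
    rewrite (bigD1 j) //= lerDl; apply: sumr_ge0 => i _; exact: pospow_ge0.
  - by rewrite invr_gt0 ltr0n.
  - by rewrite invf_le1 ?ler1n ?ltr0n.
  - have q2 : 2^-1 <= (N m)%:R^-1 :> R.
      by rewrite lef_pV2 ?posrE ?ltr0n // ler_nat.
    have qp : 0 < (N m)%:R^-1 :> R by rewrite invr_gt0 ltr0n.
    rewrite -exprVn expr2; nra.
have [n' en] : exists n', n = n'.+2.
  have kk : forall k, k != 0%N -> k != 1%N -> k = k.-2.+2 by case=> [|[|k]].
  by exists n.-2; exact: kk.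
subst n.
have Apos : 0 < A.
  have su0 : sphere (n'.+2) (@wpt R n' 0) by apply: wpt_sphere; rewrite lexx ler01.
  have [hC [B0 [BA [S0 [SB [dl0 dle]]]]]] := facts M0 (leqnn _) _ su0.
  rewrite lt_neqAle A0 andbT; apply/eqP => A0e.
  have Be : B M0 = 0 by rewrite -A0e in BA; lra.
  move: hC; rewrite Be mulr0 addr0; lra.
have iA : 0 <= 2 / A by rewrite divr_ge0 // ltW.
have hK := @archi_boundP R (2 / A) iA.
set K := Num.Def.archi_bound _ in hK.
exists (maxn M0 K.+2) => m; rewrite geq_max => /andP[hm hKm] u su.
have m0 : (0 < m)%N := leq_trans M0p hm.
have [hC [B0 [BA [S0 [SB [dl0 dle]]]]]] := facts m hm u su.
have NK : (K.+1 <= N m)%N.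
  apply: (@many_points _ n' _ (U m) (m%:R^-1) K (Ucov m m0) (Udiam m m0)).
  rewrite lef_pV2 ?posrE ?ltr0n // ler_nat; exact: ltnW.
rewrite disc_eq; apply: (@arith1 _ _ _ _ _ _ (dl m) e) => //.
- by apply: sumr_ge0 => i _; exact: pospow_ge0.
- by rewrite invr_gt0 ltr0n (leq_trans _ NK).
- have -> : A / 2 = (2 / A)^-1 by rewrite invf_div.
  rewrite lef_pV2 ?posrE ?ltr0n ?divr_gt0 ?(leq_trans _ NK) //.
  apply: (le_trans (ltW hK)); rewrite ler_nat; exact: ltnW.
Qed.
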